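(* Let $G=(V,E)$ be a finite connected undirected graph with $V=\{1,\dots,n\}$, symmetric nonnegative adjacency matrix $W=W^T$ with every row having a positive entry, $D=\operatorname{diag}(d_1,\dots,d_n)$ with $d_i=\sum_j W_{ij}$, and $P=D^{-1}W$. Let $A=\operatorname{diag}(\alpha_1,\dots,\alpha_n)$ with $\alpha_i\in(0,1)$ for all $i$. For $i\in V$ let $$K_i(A)=\frac{1}{e_i^T[I-AP]^{-1}\underline{1}}.$$ Then for all $i,j\in V$, $$\frac{d_i}{\alpha_i K_i(A)}\,\pi_j(i)=\frac{d_j}{\alpha_j K_j(A)}\,\pi_i(j),$$ where $\pi_j(i)$ denotes the Occupation-time Personalized PageRank of node $j$ with restart distribution $e_i^T$.
   Context: $e_i$ is the $i$th standard basis column vector and $\underline{1}$ the all-ones column vector. For a probability vector $v$ on $V$, consider the Markov chain $(X_t)$ on $V$ with transition matrix $\tilde P=AP+(I-A)\underline{1}v^T$ (at node $i$, with probability $1-\alpha_i$ the walk restarts at a node drawn from $v$, otherwise it moves according to $P$). The Occupation-time Personalized PageRank is $\pi_j(v)=\lim_{t\to\infty}\mathbb P(X_t=j)$, the stationary distribution of $\tilde P$; and $\pi_j(i):=\pi_j(e_i^T)$. *)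

(* Defs.v *)
From HB Require Import structures.
From mathcomp Require Import all_boot all_order all_algebra.
Set Implicit Arguments. Unset Strict Implicit. Unset Printing Implicit Defensive.
Import Order.TTheory GRing.Theory Num.Theory.
Local Open Scope ring_scope.

Section PPR.
Variables (R : realFieldType) (n : nat).

Definition deg (W : 'M[R]_n) (i : 'I_n) : R := \sum_(j < n) W i j.

Definition transP (W : 'M[R]_n) : 'M[R]_n :=
  invmx (diag_mx (\row_i deg W i)) *m W.

Definition Amx (alpha : 'I_n -> R) : 'M[R]_n := diag_mx (\row_i alpha i).

Definition ebasis (i : 'I_n) : 'rV[R]_n := delta_mx 0 i.

Definition ones : 'cV[R]_n := const_mx 1.

Definition Kfun (W : 'M[R]_n) (alpha : 'I_n -> R) (i : 'I_n) : R :=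
  1 / (ebasis i *m invmx (1%:M - Amx alpha *m transP W) *m ones) 0 0.

Definition Ptilde (W : 'M[R]_n) (alpha : 'I_n -> R) (v : 'rV[R]_n) : 'M[R]_n :=
  Amx alpha *m transP W + (1%:M - Amx alpha) *m ones *m v.

Definition is_stationary (M : 'M[R]_n) (p : 'rV[R]_n) : Prop :=
  [/\ forall j, 0 <= p 0 j, \sum_(j < n) p 0 j = 1 & p *m M = p].

Definition connected_graph (W : 'M[R]_n) : Prop :=
  forall i j : 'I_n, connect [rel x y | 0 < W x y] i j.

End PPR.

Arguments deg {R n}.
Arguments transP {R n}.
Arguments Amx {R n}.
Arguments ebasis {R n}.
Arguments ones {R n}.
Arguments Kfun {R n}.
Arguments Ptilde {R n}.
Arguments is_stationary {R n}.
Arguments connected_graph {R n}.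

(* Main.v *)
Require Import Defs.
From HB Require Import structures.
From mathcomp Require Import all_boot all_order all_algebra.
From mathcomp Require Import ring lra.
Import Order.TTheory GRing.Theory Num.Theory.
Local Open Scope ring_scope.

Lemma unit_of_ker (R : fieldType) (n : nat) (B : 'M[R]_n) :
  (forall x : 'cV_n, B *m x = 0 -> x = 0) -> B \in unitmx.
Proof.
move=> H; rewrite -unitmx_tr -row_free_unit -kermx_eq0; apply/eqP/row_matrixP => k.
rewrite row0; apply: trmx_inj; rewrite trmx0; apply: H.
apply: trmx_inj; rewrite trmx_mul trmxK trmx0 -row_mul mulmx_ker.
by rewrite row0.
Qed.

Section S.
Variables (R : realFieldType) (n : nat) (W : 'M[R]_n) (alpha : 'I_n -> R).
Hypothesis HWnn : forall i j, 0 <= W i j.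
Hypothesis HWrow : forall i, exists j, 0 < W i j.
Hypothesis Halpha : forall i, 0 < alpha i < 1.

Lemma deg_gt0 k : 0 < deg W k.
Proof.
have [j Hj] := HWrow k; rewrite /deg (bigD1 j) //=.
by apply: ltr_wpDr => //; apply: sumr_ge0 => l _.
Qed.

Lemma transPE : transP W = \matrix_(k, j) (W k j / deg W k).
Proof.
set Dg := diag_mx (\row_i deg W i).
have uD : Dg \in unitmx.
  rewrite unitmxE det_diag unitfE; apply/prodf_neq0 => i _.
  by rewrite mxE gt_eqF // deg_gt0.
have Hw : W = Dg *m \matrix_(k, j) (W k j / deg W k).
  apply/matrixP => i j; rewrite mul_diag_mx !mxE mulrC divfK //.
  by rewrite gt_eqF // deg_gt0.
rewrite /transP -/Dg [X in _ *m X = _]Hw mulmxA mulVmx // mul1mx.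
by [].
Qed.

Lemma APE : Amx alpha *m transP W = \matrix_(k, j) (alpha k * (W k j / deg W k)).
Proof. by rewrite transPE mul_diag_mx; apply/matrixP => i j; rewrite !mxE. Qed.

Lemma B_unit : (1%:M - Amx alpha *m transP W) \in unitmx.
Proof.
apply: unit_of_ker => x Hx; apply/matrixP => k l; rewrite mxE (ord1 l).
have Hrow m : x m 0 = \sum_j alpha m * (W m j / deg W m) * x j 0.
  move/matrixP: Hx => /(_ m 0); rewrite mulmxBl mul1mx APE !mxE.
  under eq_bigr do rewrite mxE.
  by move/eqP; rewrite subr_eq0 => /eqP.
have [m _ Hm] := arg_maxP (fun j => `|x j 0|) (isT : predT k).
have Hle : `|x m 0| <= alpha m * `|x m 0|.
  rewrite {1}Hrow; apply: le_trans (ler_norm_sum _ _ _) _.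
  apply: le_trans (_ : \sum_j alpha m * (W m j / deg W m) * `|x m 0| <= _).
    apply: ler_sum => j _; rewrite normrM ger0_norm; last first.
      have := Halpha m; have := deg_gt0 m; have := HWnn m j => *.
      apply: mulr_ge0; first by case/andP: (Halpha m) => /ltW.
      by apply: divr_ge0 => //; apply: ltW; apply: deg_gt0.
    apply: ler_wpM2l; last exact: Hm.
    apply: mulr_ge0; first by case/andP: (Halpha m) => /ltW.
    by apply: divr_ge0 => //; apply: ltW; apply: deg_gt0.
  rewrite -mulr_suml -mulr_sumr -mulr_suml -/(deg W m) divff ?mulr1 //.
  by rewrite gt_eqF // deg_gt0.
have H0 : `|x m 0| <= 0.
  case/andP: (Halpha m) => h1 h2; have h3 := normr_ge0 (x m 0); nra.
have := Hm k isT; rewrite /= => Hk.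
by apply/eqP; rewrite -normr_le0; apply: le_trans Hk H0.
Qed.

End S.

Theorem theorem2 (R : realFieldType) (n : nat) (W : 'M[R]_n) (alpha : 'I_n -> R)
  (HWsym : W^T = W)
  (HWnn : forall i j, 0 <= W i j)
  (HWrow : forall i, exists j, 0 < W i j)
  (Hconn : connected_graph W)
  (Halpha : forall i, 0 < alpha i < 1)
  (pi : 'I_n -> 'rV[R]_n)
  (Hpi : forall i, is_stationary (Ptilde W alpha (ebasis i)) (pi i)) :
  forall i j : 'I_n,
    deg W i / (alpha i * Kfun W alpha i) * pi i 0 j
    = deg W j / (alpha j * Kfun W alpha j) * pi j 0 i.
Proof.
set B := 1%:M - Amx alpha *m transP W.
have uB : B \in unitmx := @B_unit _ _ W alpha HWnn HWrow Halpha.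
have dpos := @deg_gt0 _ _ W HWnn HWrow.
have anz k : alpha k != 0 by case/andP: (Halpha k) => h _; rewrite gt_eqF.
have dnz k : deg W k != 0 by rewrite gt_eqF.
set D' := diag_mx (\row_k (deg W k / alpha k)).
set E := diag_mx (\row_k (alpha k / deg W k)).
set S := D' - W.
have ED : E *m D' = 1%:M.
  apply/matrixP => i j; rewrite mul_diag_mx !mxE.
  case: eqVneq => [->|_]; last by rewrite !mulr0n mulr0.
  by rewrite !mulr1n; field; apply/andP; split.
have Hb : B = E *m S.
  rewrite /S mulmxBr ED /B; congr (_ - _).
  rewrite (@APE _ _ W alpha HWnn HWrow) mul_diag_mx; apply/matrixP => i j; rewrite !mxE; field.
  by [].
have uS : S \in unitmx by move: uB; rewrite Hb unitmx_mul => /andP[].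
have BX : B *m (invmx S *m D') = 1%:M.
  by rewrite Hb -!mulmxA (mulmxA S) mulmxV // mul1mx ED.
have HM : invmx B = invmx S *m D'.
  by rewrite -(mulKmx uB (invmx S *m D')) BX mulmx1.
set N := D' *m invmx B.
have NT : N^T = N.
  rewrite /N HM !trmx_mul trmx_inv /S linearB /= HWsym tr_diag_mx.
  by rewrite mulmxA.
have NE k l : N k l = deg W k / alpha k * invmx B k l.
  by rewrite /N mul_diag_mx !mxE.
have Hst k : Kfun W alpha k != 0 /\ forall l, pi k 0 l = Kfun W alpha k * invmx B k l.
  case: (Hpi k) => _ Hsum Hst.
  set p := pi k in Hsum Hst *.
  set C := p *m (1%:M - Amx alpha) *m ones.
  rewrite /Ptilde mulmxDr !mulmxA in Hst.
  have Hpb : p *m B = C *m ebasis k.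
    by rewrite /B mulmxBr mulmx1 mulmxA -[X in X - _]Hst /transP !mulmxA addrC addKr.
  have Hp : p = C *m (ebasis k *m invmx B).
    by rewrite -(mulmxK uB p) Hpb mulmxA.
  have Hpl l : p 0 l = C 0 0 * invmx B k l.
    by rewrite Hp [LHS]mxE big_ord1 /ebasis -rowE; congr (_ * _); rewrite mxE.
  have Ht : (ebasis k *m invmx B *m ones) 0 0 = \sum_l invmx B k l.
    rewrite /ebasis -rowE mxE; apply: eq_bigr => l _.
    by rewrite !mxE mulr1.
  have Hs : C 0 0 * (ebasis k *m invmx B *m ones) 0 0 = 1.
    by rewrite Ht mulr_sumr -Hsum; apply: eq_bigr => l _; rewrite Hpl.
  have tnz : (ebasis k *m invmx B *m ones) 0 0 != 0.
    by apply/eqP => h; move: Hs; rewrite h mulr0 => /eqP; rewrite eq_sym oner_eq0.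
  have KE : Kfun W alpha k = C 0 0.
    by rewrite /Kfun -/B -Hs mulfK.
  split; last by move=> l; rewrite Hpl KE.
  by rewrite KE; apply/eqP => h; move: Hs; rewrite h mul0r => /eqP; rewrite eq_sym oner_eq0.
move=> i j.
have side k l : deg W k / (alpha k * Kfun W alpha k) * pi k 0 l = N k l.
  have [Knz Hl] := Hst k; rewrite Hl NE; field.
  by apply/andP; split.
rewrite !side -NT mxE. by rewrite NT.
Qed.
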